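(* Let $R$ be a commutative domain of finite character with field of fractions $Q$, let $\Lambda$ be an $R$-algebra finitely generated as an $R$-module, and let $M,N,K$ be finitely generated right $\Lambda$-modules which are torsion-free as $R$-modules. Assume that $M_\mathfrak m$ is a direct summand of $N_\mathfrak m$ for every maximal ideal $\mathfrak m$ of $R$, and that $M\otimes_R Q$ is a direct summand of $K\otimes_R Q$ (as $\Lambda\otimes_R Q$-modules). Then $M$ is a direct summand of $N\oplus K$.
   Context: A commutative domain has finite character if every non-zero element lies in only finitely many maximal ideals. A module is torsion-free over $R$ if $M\to M\otimes_R Q$ is injective. *)

(* Defs.v *)
From Stdlib Require Import List.
From HB Require Import structures.
From mathcomp Require Import all_boot all_order all_algebra.
Set Implicit Arguments. Unset Strict Implicit. Unset Printing Implicit Defensive.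
Import GRing.Theory.
Local Open Scope ring_scope.

Section Ideals.
Variable R : comNzRingType.

Definition is_ideal (I : R -> Prop) : Prop :=
  I 0 /\ (forall x y, I x -> I y -> I (x + y)) /\ (forall r x, I x -> I (r * x)).

Definition is_maximal_ideal (m : R -> Prop) : Prop :=
  is_ideal m /\ ~ m 1 /\
  forall J : R -> Prop, is_ideal J -> (forall x, m x -> J x) ->
    J 1 \/ (forall x, J x <-> m x).

Definition finite_character : Prop :=
  forall x : R, x != 0 ->
    exists s : seq (R -> Prop),
      forall m, is_maximal_ideal m -> m x ->
        exists2 p, List.In p s & (forall y, m y <-> p y).
End Ideals.

(* An R-algebra is [L : algType R]; a right L-module is an [lmodType L^c]. *)
Section Modules.
Variables (R : comNzRingType) (L : algType R).

Definition fg_Rmodule : Prop :=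
  exists s : seq L, forall x : L,
    exists c : 'I_(size s) -> R, x = \sum_(i < size s) c i *: s`_i.

Variable M : lmodType (L^c).

Definition ractL (m : M) (l : L) : M := @GRing.scale (L^c) M l m.
Definition ractR (r : R) (m : M) : M := ractL m (r%:A).

Definition fg_right_module : Prop :=
  exists s : seq M, forall x : M,
    exists c : 'I_(size s) -> L, x = \sum_(i < size s) ractL s`_i (c i).

(* Concrete model of the localization S^{-1} M : pairs (m, s) with s in S,
   modulo (m,s) ~ (m',s') iff u (s' m - s m') = 0 for some u in S. *)
Definition loc_valid (S : R -> Prop) (x : M * R) : Prop := S x.2.
Definition loc_eq (S : R -> Prop) (x y : M * R) : Prop :=
  exists2 u, S u & ractR u (ractR y.2 x.1 - ractR x.2 y.1) = 0.
Definition loc_add (x y : M * R) : M * R :=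
  (ractR y.2 x.1 + ractR x.2 y.1, x.2 * y.2).
(* action of a fraction l/t of S^{-1}L on m/s *)
Definition loc_act (x : M * R) (l : L) (t : R) : M * R :=
  (ractL x.1 l, x.2 * t).

(* torsion-free over R: M -> M (x)_R Q = S^{-1}M (S = R \ {0}) is injective *)
Definition Rtorsionfree : Prop :=
  forall m m' : M, loc_eq (fun r => r != 0) (m, 1) (m', 1) -> m = m'.
End Modules.

(* F represents an S^{-1}L-linear map S^{-1}M -> S^{-1}N *)
Definition loc_linear (R : comNzRingType) (L : algType R) (M N : lmodType (L^c))
    (S : R -> Prop) (F : M * R -> N * R) : Prop :=
  (forall x, loc_valid S x -> loc_valid S (F x)) /\
  (forall x y, loc_valid S x -> loc_valid S y -> loc_eq S x y -> loc_eq S (F x) (F y)) /\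
  (forall x y, loc_valid S x -> loc_valid S y ->
       loc_eq S (F (loc_add x y)) (loc_add (F x) (F y))) /\
  (forall x l t, loc_valid S x -> S t ->
       loc_eq S (F (loc_act x l t)) (loc_act (F x) l t)).

Section LocMaps.
Variables (R : comNzRingType) (L : algType R) (M N : lmodType (L^c)).

Definition loc_summand (S : R -> Prop) : Prop :=
  exists (F : M * R -> N * R) (G : N * R -> M * R),
    [/\ loc_linear S F, loc_linear S G &
        forall x, loc_valid S x -> loc_eq S (G (F x)) x].
End LocMaps.

Definition is_summand (R : comNzRingType) (L : algType R) (M N : lmodType (L^c)) : Prop :=
  exists (f : {linear M -> N}) (g : {linear N -> M}), cancel f g.

(* Main.v *)
Require Import Defs.
From HB Require Import structures.
From Stdlib Require Import ClassicalEpsilon Classical FunctionalExtensionality PropExtensionality.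
From mathcomp Require Import all_boot all_order all_algebra.
From mathcomp Require Import ring.
From mathcomp Require classical_sets.
Set Implicit Arguments. Unset Strict Implicit. Unset Printing Implicit Defensive.
Import GRing.Theory.
Local Open Scope ring_scope.

Section Basic.
Variables (R : comNzRingType) (L : algType R) (M : lmodType L^c).
Implicit Types (m : M) (l : L) (r : R).

Lemma ractLDm m m' l : ractL (m + m') l = ractL m l + ractL m' l.
Proof. by rewrite /ractL scalerDr. Qed.
Lemma ractLDl m l l' : ractL m (l + l') = ractL m l + ractL m l'.
Proof. by rewrite /ractL scalerDl. Qed.
Lemma ractLA m l l' : ractL (ractL m l) l' = ractL m (l * l').
Proof. by rewrite /ractL scalerA. Qed.
Lemma ractL1 m : ractL m 1 = m.
Proof. by rewrite /ractL scale1r. Qed.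
Lemma ractL0m l : ractL (0 : M) l = 0.
Proof. by rewrite /ractL scaler0. Qed.
Lemma ractL0l m : ractL m 0 = 0.
Proof. by rewrite /ractL scale0r. Qed.
Lemma ractLNm m l : ractL (- m) l = - ractL m l.
Proof. by rewrite /ractL scalerN. Qed.
Lemma ractLBm m m' l : ractL (m - m') l = ractL m l - ractL m' l.
Proof. by rewrite /ractL scalerBr. Qed.

Lemma ractRA r r' m : ractR r (ractR r' m) = ractR (r * r') m.
Proof. by rewrite /ractR ractLA mulr_algl scalerA mulrC. Qed.
Lemma ractR1 m : ractR 1 m = m.
Proof. by rewrite /ractR scale1r ractL1. Qed.
Lemma ractRDr r m m' : ractR r (m + m') = ractR r m + ractR r m'.
Proof. exact: ractLDm. Qed.
Lemma ractRDl r r' m : ractR (r + r') m = ractR r m + ractR r' m.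
Proof. by rewrite /ractR scalerDl ractLDl. Qed.
Lemma ractR0 r : ractR r (0 : M) = 0.
Proof. exact: ractL0m. Qed.
Lemma ractR0l m : ractR 0 m = 0.
Proof. by rewrite /ractR scale0r ractL0l. Qed.
Lemma ractRN r m : ractR r (- m) = - ractR r m.
Proof. exact: ractLNm. Qed.
Lemma ractRNl r m : ractR (- r) m = - ractR r m.
Proof. by rewrite /ractR scaleNr /ractL scaleNr. Qed.
Lemma ractRBr r m m' : ractR r (m - m') = ractR r m - ractR r m'.
Proof. exact: ractLBm. Qed.
Lemma ractRBl r r' m : ractR (r - r') m = ractR r m - ractR r' m.
Proof. by rewrite ractRDl ractRNl. Qed.
Lemma ractRL r m l : ractR r (ractL m l) = ractL (ractR r m) l.
Proof. by rewrite /ractR !ractLA mulr_algl mulr_algr. Qed.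
Lemma ractLZ m r l : ractL m (r *: l) = ractR r (ractL m l).
Proof. by rewrite ractRL /ractR ractLA mulr_algl. Qed.
Lemma ractR_sumr r I (s : seq I) (P : pred I) (F : I -> M) :
  ractR r (\sum_(i <- s | P i) F i) = \sum_(i <- s | P i) ractR r (F i).
Proof. by apply: (big_morph _ (ractRDr r) (ractR0 r)). Qed.
Lemma ractR_suml I (s : seq I) (P : pred I) (F : I -> R) m :
  ractR (\sum_(i <- s | P i) F i) m = \sum_(i <- s | P i) ractR (F i) m.
Proof. by apply: (big_morph (fun r => ractR r m) (fun a b => ractRDl a b m) (ractR0l m)). Qed.
Lemma ractL_suml l I (s : seq I) (P : pred I) (F : I -> M) :
  ractL (\sum_(i <- s | P i) F i) l = \sum_(i <- s | P i) ractL (F i) l.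
Proof. by apply: (big_morph (fun m => ractL m l) (fun a b => ractLDm a b l) (ractL0m l)). Qed.
End Basic.

Section RMod.
Variables (R : comNzRingType) (L : algType R) (M : lmodType L^c).
Definition RM : Type := M.
HB.instance Definition _ := GRing.Zmodule.on RM.
Lemma RM_ax1 a b (v : RM) : ractR a (ractR b v) = ractR (a * b) v.
Proof. exact: ractRA. Qed.
HB.instance Definition _ := GRing.Zmodule_isLmodule.Build R RM
  RM_ax1 (@ractR1 _ _ M) (@ractRDr _ _ M) (fun v a b => @ractRDl _ _ M a b v).
Lemma ractRE r (x : M) : ractR r x = (r *: (x : RM) : M).
Proof. by []. Qed.
End RMod.


Section Loc.
Variables (R : idomainType) (L : algType R) (M : lmodType L^c) (S : R -> Prop).
Local Notation RM := (@RM R L M).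
Hypothesis S1 : S 1.
Hypothesis SM : forall a b, S a -> S b -> S (a * b).
Implicit Types (x y z : M * R).

Lemma lq_refl x : loc_eq S x x.
Proof. by exists 1 => //; rewrite subrr ractR0. Qed.

Lemma lq_sym x y : loc_eq S x y -> loc_eq S y x.
Proof. by case=> u Su H; exists u => //; rewrite -opprB ractRN H oppr0. Qed.

Lemma lq_trans x y z : loc_valid S y -> loc_eq S x y -> loc_eq S y z -> loc_eq S x z.
Proof.
case: x => x1 x2; case: y => y1 y2; case: z => z1 z2 /= Sy.
case=> u Su /= Hu; case=> w Sw /= Hw; exists (u * w * y2); first by apply: SM => //; apply: SM.
move: Hu Hw; rewrite /= !ractRE => Hu Hw.
have -> : (u * w * y2) *: ((z2 *: (x1 : RM)) - x2 *: (z1 : RM) : RM) =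
   (w * z2) *: (u *: (y2 *: (x1 : RM) - x2 *: (y1 : RM))) +
   (u * x2) *: (w *: (z2 *: (y1 : RM) - y2 *: (z1 : RM))).
  rewrite !scalerBr !scalerA.
  have -> : w * z2 * u * y2 = u * w * y2 * z2 by ring.
  have -> : u * x2 * w * y2 = u * w * y2 * x2 by ring.
  have -> : u * x2 * w * z2 = w * z2 * u * x2 by ring.
  by rewrite addrA subrK.
by rewrite Hu Hw !scaler0 addr0.
Qed.

Lemma lq_add x x' y y' : loc_eq S x x' -> loc_eq S y y' ->
  loc_eq S (loc_add x y) (loc_add x' y').
Proof.
case: x => a p; case: x' => a' p'; case: y => b q; case: y' => b' q'.
case=> u Su /= Hu; case=> v Sv /= Hv; exists (u * v); first exact: SM.
move: Hu Hv; rewrite /= !ractRE => Hu Hv.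
have -> : (u * v) *: ((p' * q') *: (q *: (a : RM) + p *: (b : RM)) -
          (p * q) *: (q' *: (a' : RM) + p' *: (b' : RM))) =
   (v * q * q') *: (u *: (p' *: (a : RM) - p *: (a' : RM))) +
   (u * p * p') *: (v *: (q' *: (b : RM) - q *: (b' : RM))).
  rewrite !(scalerDr, scalerBr, scalerN, scalerA) ?opprD ?addrA.
  have -> : v * q * q' * u * p' = u * v * (p' * q') * q by ring.
  have -> : v * q * q' * u * p = u * v * (p * q) * q' by ring.
  have -> : u * p * p' * v * q' = u * v * (p' * q') * p by ring.
  have -> : u * p * p' * v * q = u * v * (p * q) * p' by ring.
  by congr (_ - _); rewrite addrAC.
by rewrite Hu Hv !scaler0 addr0.
Qed.

Lemma lq_act x x' l t : loc_eq S x x' -> loc_eq S (loc_act x l t) (loc_act x' l t).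
Proof.
case: x => a p; case: x' => a' p'; case=> u Su /= Hu; exists u => //=.
rewrite !ractRL -ractLBm ractRL.
have -> : ractR (p' * t) a - ractR (p * t) a' = ractR t (ractR p' a - ractR p a').
  by rewrite ractRBr !ractRA ![t * _]mulrC.
by rewrite ractRA mulrC -ractRA Hu ractR0 ractL0m.
Qed.

Lemma lq_scale (z : M) d e : loc_eq S (z, d) (ractR e z, e * d).
Proof. by exists 1 => //=; rewrite ractRA mulrC subrr ractR0. Qed.

Lemma lq_eq x y : x = y -> loc_eq S x y.
Proof. by move=> ->; apply: lq_refl. Qed.

End Loc.

Section Glob.
Variables (R : idomainType) (L : algType R) (M N : lmodType L^c) (S : R -> Prop).
Hypothesis S1 : S 1.
Hypothesis SM : forall a b, S a -> S b -> S (a * b).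
Hypothesis Snz : forall r, S r -> r != 0.
Hypothesis tfN : Rtorsionfree N.
Variable F : M * R -> N * R.
Hypothesis linF : loc_linear S F.

Lemma tf_cancel u (z : N) : u != 0 -> ractR u z = 0 -> z = 0.
Proof.
move=> u0 H; apply: tfN; exists u => //=.
by rewrite !ractR1 subr0.
Qed.

Let Ftr := @lq_trans R L N S SM.
Let Msym := @lq_sym R L M S.
Let Nsym := @lq_sym R L N S.

Lemma FvalS y d : S d -> S (F (y, d)).2.
Proof. by case: linF => H _ ; apply: (H (y, d)). Qed.

Lemma Fresp x y : S x.2 -> S y.2 -> loc_eq S x y -> loc_eq S (F x) (F y).
Proof. by case: linF => _ [H _]; apply: H. Qed.

Lemma Qadd a b za zb D : S D ->
  loc_eq S (za, D) (F (a, 1)) -> loc_eq S (zb, D) (F (b, 1)) ->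
  loc_eq S (za + zb, D) (F (a + b, 1)).
Proof.
move=> SD Ha Hb; case: linF => V [_ [Hadd _]].
apply: (Ftr (y := (ractR D (za + zb), D * D))); first exact: SM.
  exact: lq_scale.
apply: (Ftr (y := loc_add (F (a,1)) (F (b,1)))).
  by apply: SM; apply: FvalS.
  rewrite /= ractRDr.
  exact: (@lq_add R L N S SM (za, D) _ (zb, D)).
have -> : (a + b, 1) = loc_add (a, 1) (b, 1) by rewrite /loc_add /= !ractR1 mulr1.
apply: Nsym; exact: (Hadd (a, 1) (b, 1)).
Qed.

Lemma Qact y z D l : S D ->
  loc_eq S (z, D) (F (y, 1)) -> loc_eq S (ractL z l, D) (F (ractL y l, 1)).
Proof.
move=> SD H; case: linF => V [_ [_ Hact]].
apply: (Ftr (y := loc_act (F (y, 1)) l 1)).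
  by apply: SM => //; apply: FvalS.
  have -> : (ractL z l, D) = loc_act (z, D) l 1 by rewrite /loc_act mulr1.
  exact: lq_act.
have -> : (ractL y l, 1) = loc_act (y, 1) l 1 by rewrite /loc_act mulr1.
apply: Nsym; exact: (Hact (y, 1)).
Qed.

Lemma Q0 D : S D -> loc_eq S (0, D) (F (0, 1)).
Proof.
move=> SD; case: linF => V [_ [Hadd _]].
case E: (F (0, 1)) => [z0 d0].
have Sd0 : S d0 by have := FvalS 0 S1; rewrite E.
have H := Hadd (0, 1) (0, 1) S1 S1.
have E2 : loc_add (0 : M, 1) (0, 1) = (0, 1) by rewrite /loc_add /= ractR0 addr0 mulr1.
move: H; rewrite E2 E /loc_add /= => -[u Su /=].
have -> : ractR (d0 * d0) z0 - ractR d0 (ractR d0 z0 + ractR d0 z0) = ractR (d0 * d0) (- z0).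
  by rewrite ractRDr ractRA opprD addrA subrr sub0r ractRN.
rewrite ractRA => /tf_cancel.
rewrite !mulf_neq0 ?Snz // => /(_ isT) /eqP; rewrite oppr_eq0 => /eqP ->.
by exists 1 => //=; rewrite !ractR0 subrr ractR0.
Qed.

Hypothesis fgM : fg_right_module M.

Lemma glob : exists (f : M -> N) (D : R), [/\ S D,
  (forall y, loc_eq S (f y, D) (F (y, 1))) &
  (forall l y y', f (ractL y l + y') = ractL (f y) l + f y')].
Proof.
case: fgM => s Hs.
pose dd (i : 'I_(size s)) := (F (s`_i, 1)).2.
pose D := \prod_(i < size s) dd i.
have SD : S D by apply: (big_ind S) => // i _; apply: FvalS.
have Qg (i : 'I_(size s)) : exists z, loc_eq S (z, D) (F (s`_i, 1)).
  pose e := \prod_(j < size s | j != i) dd j.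
  exists (ractR e (F (s`_i, 1)).1).
  have -> : D = e * dd i by rewrite /D (bigD1 i) //= mulrC.
  apply: Nsym; rewrite {1}[F _]surjective_pairing; exact: lq_scale.
have Qall y : exists z, loc_eq S (z, D) (F (y, 1)).
  have [c ->] := Hs y.
  apply: (big_ind (fun y => exists z, loc_eq S (z, D) (F (y, 1)))).
  - by exists 0; apply: Q0.
  - by move=> a b [za Ha] [zb Hb]; exists (za + zb); apply: Qadd.
  - move=> i _; have [z Hz] := Qg i; exists (ractL z (c i)); exact: Qact.
pose f y := proj1_sig (constructive_indefinite_description _ (Qall y)).
have fP y : loc_eq S (f y, D) (F (y, 1)) by rewrite /f; case: constructive_indefinite_description.
have uniq y0 z z' : loc_eq S (z, D) (F (y0, 1)) -> loc_eq S (z', D) (F (y0, 1)) -> z = z'.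
  move=> H1 H2.
  have : loc_eq S (z, D) (z', D).
    apply: (Ftr (y := F (y0, 1))) => //; first exact: FvalS.
    exact: Nsym.
  case=> u Su /=; rewrite -ractRBr ractRA => /tf_cancel.
  by rewrite mulf_neq0 ?Snz // => /(_ isT) /eqP; rewrite subr_eq0 => /eqP.
exists f, D; split => // l y y'.
apply: (uniq (ractL y l + y')).
  exact: fP.
apply: Qadd => //; try exact: fP.
by apply: Qact => //; exact: fP.
Qed.
End Glob.

Definition Llin (R : comNzRingType) (L : algType R) (U V : lmodType L^c) (f : U -> V) :=
  forall l y y', f (ractL y l + y') = ractL (f y) l + f y'.

Section LlinTh.
Variables (R : comNzRingType) (L : algType R) (U V : lmodType L^c) (f : U -> V).
Hypothesis hf : Llin f.
Lemma LlinD y y' : f (y + y') = f y + f y'.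
Proof. by rewrite -{1}[y]ractL1 hf ractL1. Qed.
Lemma Llin0 : f 0 = 0.
Proof. by apply: (@addrI _ (f 0)); rewrite -LlinD !addr0. Qed.
Lemma LlinL y l : f (ractL y l) = ractL (f y) l.
Proof. by rewrite -[ractL y l]addr0 hf Llin0 addr0. Qed.
Lemma LlinR r y : f (ractR r y) = ractR r (f y).
Proof. exact: LlinL. Qed.
Lemma LlinN y : f (- y) = - f y.
Proof. by apply: (@addrI _ (f y)); rewrite -LlinD !subrr Llin0. Qed.
Lemma Llin_sum I (s : seq I) (P : pred I) (F : I -> U) :
  f (\sum_(i <- s | P i) F i) = \sum_(i <- s | P i) f (F i).
Proof. exact: (big_morph f LlinD Llin0). Qed.
End LlinTh.

Lemma Llin_comp (R : comNzRingType) (L : algType R) (U V W : lmodType L^c)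
  (f : U -> V) (g : V -> W) : Llin f -> Llin g -> Llin (fun x => g (f x)).
Proof. by move=> hf hg l y y'; rewrite hf hg. Qed.

Lemma Llin_iter (R : comNzRingType) (L : algType R) (U : lmodType L^c)
  (f : U -> U) i : Llin f -> Llin (iter i f).
Proof. by move=> hf; elim: i => [|i IH] l y y' //=; rewrite IH hf. Qed.

Section CH.
Variables (R : comNzRingType) (L : algType R) (M : lmodType L^c) (n : nat).
Variable xs : 'I_n.+1 -> M.
Hypothesis gen : forall y, exists c : 'I_n.+1 -> R, y = \sum_j ractR (c j) (xs j).
Variable sigma : M -> M.
Hypothesis slin : Llin sigma.
Variable C : 'M[R]_n.+1.
Hypothesis HC : forall j, sigma (xs j) = \sum_k ractR (C j k) (xs k).

Lemma iterC i j : iter i sigma (xs j) = \sum_k ractR ((C ^+ i) j k) (xs k).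
Proof.
elim: i j => [|i IH] j /=.
  rewrite (bigD1 j) //= big1 ?addr0; first by rewrite expr0 mxE eqxx ractR1.
  by move=> k kj; rewrite expr0 mxE eq_sym (negbTE kj) ractR0l.
rewrite IH (Llin_sum slin).
rewrite [LHS](eq_bigr (fun k => ractR ((C ^+ i) j k) (sigma (xs k)))); last first.
  by move=> k _; exact: (LlinR slin).
under [LHS]eq_bigr => k _ do rewrite HC ractR_sumr.
rewrite exchange_big /=; apply: eq_bigr => l _.
rewrite exprSr -mulmxE mxE ractR_suml; apply: eq_bigr => k _.
by rewrite ractRA.
Qed.

Lemma hornerC (p : {poly R}) j :
  \sum_(i < size p) ractR p`_i (iter i sigma (xs j)) =
  \sum_k ractR (horner_mx C p j k) (xs k).
Proof.
have -> : horner_mx C p = horner_mx C (\poly_(i < size p) p`_i) by rewrite coefK.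
rewrite poly_def linear_sum /=.
under [RHS]eq_bigr => k _ do rewrite summxE ractR_suml.
rewrite exchange_big /=; apply: eq_bigr => i _.
rewrite iterC ractR_sumr; apply: eq_bigr => k _.
rewrite linearZ /= rmorphXn /= horner_mx_X mxE ractRA.
by [].
Qed.


Let chi := char_poly C.

Lemma CH0 y : \sum_(i < size chi) ractR chi`_i (iter i sigma y) = 0.
Proof.
have [c ->] := gen y.
have itl i : Llin (iter i sigma) by exact: Llin_iter.
under eq_bigr => i _ do rewrite (Llin_sum (itl i)) ractR_sumr.
rewrite exchange_big /=; apply: big1 => j _.
under eq_bigr => i _ do rewrite (LlinR (itl i)) ractRA mulrC -ractRA.
rewrite -ractR_sumr hornerC Cayley_Hamilton.
by rewrite big1 ?ractR0 // => k _; rewrite mxE ractR0l.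
Qed.

Lemma CHinv : exists rho : M -> M, Llin rho /\
  forall y, rho (sigma y) = ractR (chi`_0) y.
Proof.
pose rho y := - \sum_(i < n.+1) ractR chi`_i.+1 (iter i sigma y).
exists rho; split.
  move=> l y y'; rewrite /rho ractLNm -opprD; congr (- _).
  rewrite ractL_suml -big_split /=; apply: eq_bigr => i _.
  by rewrite (Llin_iter i slin) ractRDr ractRL.
move=> y; have := CH0 y; rewrite size_char_poly big_ord_recl /= => /eqP.
rewrite addr_eq0 => /eqP ->; rewrite /rho; congr (- _).
by apply: eq_bigr => i _; rewrite -iterSr /bump /= add0n add1n.
Qed.
End CH.

Section Ideals.
Variables (R : idomainType) (m : R -> Prop).
Hypothesis mmax : is_maximal_ideal m.

Lemma mI : is_ideal m. Proof. by case: mmax. Qed.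
Lemma m0 : m 0. Proof. by case: mI. Qed.
Lemma mD x y : m x -> m y -> m (x + y). Proof. by case: mI => _ []; auto. Qed.
Lemma mMl r x : m x -> m (r * x). Proof. by case: mI => _ []; auto. Qed.
Lemma mMr r x : m x -> m (x * r). Proof. by rewrite mulrC; apply: mMl. Qed.
Lemma mN x : m x -> m (- x). Proof. by move=> H; rewrite -mulN1r; apply: mMl. Qed.
Lemma mB x y : m x -> m y -> m (x - y). Proof. by move=> *; apply: mD => //; apply: mN. Qed.
Lemma mn1 : ~ m 1. Proof. by case: mmax => _ []. Qed.

Lemma mprime a b : m (a * b) -> m a \/ m b.
Proof.
move=> mab; case: (classic (m a)) => ma; [by left | right].
pose J x := exists y z, m y /\ x = y + z * a.
have JI : is_ideal J.
  split; first by exists 0, 0; split; [exact: m0 | rewrite mul0r addr0].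
  split.
    move=> x x' [y [z [my ->]]] [y' [z' [my' ->]]].
    exists (y + y'), (z + z'); split; first exact: mD.
    by rewrite mulrDl; ring.
  move=> r x [y [z [my ->]]]; exists (r * y), (r * z); split; first exact: mMl.
  by ring.
case: mmax => _ [_ /(_ J JI)] []; first by move=> x mx; exists x, 0; rewrite mul0r addr0.
  case=> y [z [my E]].
  have -> : b = y * b + z * (a * b) by rewrite mulrA -mulrDl -E mul1r.
  by apply: mD; [apply: mMr | apply: mMl].
move=> H; exfalso; apply: ma; apply/H; exists 0, 1; split; [exact: m0 | by rewrite mul1r add0r].
Qed.

Lemma mexp a k : m (a ^+ k) -> m a.
Proof.
elim: k => [|k IH]; first by rewrite expr0 => /mn1.
by rewrite exprS => /mprime [//|]; apply: IH.
Qed.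

Lemma horner_split (p : {poly R}) b : exists q, p.[b] = p.[0] + b * q.
Proof.
elim/poly_ind: p => [|p c _]; first by exists 0; rewrite !horner0 mulr0 addr0.
by exists p.[b]; rewrite !hornerE addrC mulrC.
Qed.

Lemma det_cong n (v b : R) (e : 'I_n.+1 -> 'I_n.+1 -> R) :
  ~ m v -> m b ->
  ~ m (\det (\matrix_(j, k) (v * (j == k)%:R + b * e j k))).
Proof.
move=> mv mb.
pose P : 'M[{poly R}]_n.+1 := \matrix_(j, k) ((v * (j == k)%:R)%:P + 'X * (e j k)%:P).
have E1 : \matrix_(j, k) (v * (j == k)%:R + b * e j k) = map_mx (horner_eval b) P.
  by apply/matrixP => j k; rewrite !mxE /= horner_evalE !hornerE.
have E0 : (v%:M : 'M[R]_n.+1) = map_mx (horner_eval 0) P.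
  apply/matrixP => j k; rewrite !mxE /= horner_evalE !hornerE.
  by case: (j == k); rewrite ?mulr1 ?mulr0 ?mul0r ?addr0.
have [q Hq] := horner_split (\det P) b.
rewrite E1 det_map_mx /= horner_evalE Hq -horner_evalE -det_map_mx -E0 det_scalar.
move=> H; apply: mv; apply: (@mexp _ n.+1).
have -> : v ^+ n.+1 = v ^+ n.+1 + b * q - b * q by rewrite addrK.
by apply: mB => //; apply: mMr.
Qed.
End Ideals.

Lemma CHmax (R : idomainType) (L : algType R) (M : lmodType L^c) (n : nat)
  (xs : 'I_n.+1 -> M)
  (gen : forall y, exists c : 'I_n.+1 -> R, y = \sum_j ractR (c j) (xs j))
  (m : R -> Prop) (mmax : is_maximal_ideal m)
  (sigma tau : M -> M) (v b : R) :
  Llin sigma -> ~ m v -> m b ->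
  (forall y, sigma y = ractR v y + ractR b (tau y)) ->
  exists rho c, [/\ Llin rho, ~ m c & forall y, rho (sigma y) = ractR c y].
Proof.
move=> slin mv mb Hs.
pose e j := proj1_sig (constructive_indefinite_description _ (gen (tau (xs j)))).
have eP j : tau (xs j) = \sum_k ractR (e j k) (xs k).
  by rewrite /e; case: constructive_indefinite_description.
pose C := \matrix_(j, k) (v * (j == k)%:R + b * e j k).
have HC j : sigma (xs j) = \sum_k ractR (C j k) (xs k).
  rewrite Hs eP ractR_sumr (bigD1 j) //= [X in _ = X](bigD1 j) //= !mxE eqxx mulr1.
  rewrite ractRDl addrA; congr (_ + _); first by rewrite ractRA.
  apply: eq_bigr => k kj.
  by rewrite !mxE eq_sym (negbTE kj) mulr0 add0r ractRA.
have [rho [rlin Hr]] := CHinv gen slin HC.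
exists rho, (char_poly C)`_0; split => //.
rewrite char_poly_det => H.
apply: (det_cong mmax (e := e) mv mb).
have -> : \det (\matrix_(j, k) (v * (j == k)%:R + b * e j k)) =
   (-1) ^+ n.+1 * ((-1) ^+ n.+1 * \det C).
  by rewrite mulrA -exprMn mulrNN mulr1 expr1n mul1r.
exact: mMl.
Qed.

Lemma Rgen (R : comNzRingType) (L : algType R) (M : lmodType L^c) :
  fg_Rmodule L -> fg_right_module M ->
  exists n (xs : 'I_n.+1 -> M),
    forall y, exists c : 'I_n.+1 -> R, y = \sum_j ractR (c j) (xs j).
Proof.
case=> sL HL [sM HM].
pose gs := [seq ractL a l | a <- sM, l <- sL].
pose n := size gs.
pose xs (j : 'I_n.+1) := (0 :: gs)`_j.
exists n, xs.
pose Sp y := exists c : 'I_n.+1 -> R, y = \sum_j ractR (c j) (xs j).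
have Sp0 : Sp 0 by exists (fun _ => 0); rewrite big1 // => j _; rewrite ractR0l.
have SpD y y' : Sp y -> Sp y' -> Sp (y + y').
  case=> c -> [c' ->]; exists (fun j => c j + c' j).
  by rewrite -big_split; apply: eq_bigr => j _; rewrite ractRDl.
have SpR r y : Sp y -> Sp (ractR r y).
  case=> c ->; exists (fun j => r * c j).
  by rewrite ractR_sumr; apply: eq_bigr => j _; rewrite ractRA.
have Spg g : g \in gs -> Sp g.
  move=> gin; have ilt : ((index g gs).+1 < n.+1)%N by rewrite ltnS index_mem.
  exists (fun j => (j == Ordinal ilt)%:R).
  rewrite (bigD1 (Ordinal ilt)) //= big1 ?addr0.
    by rewrite eqxx ractR1 /xs /= nth_index.
  by move=> j /negbTE ->; rewrite ractR0l.
move=> y; have [c ->] := HM y.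
apply: (big_ind Sp) => // i _.
have [e ->] := HL (c i).
rewrite (big_morph (ractL sM`_i) (ractLDl sM`_i) (ractL0l sM`_i)).
apply: (big_ind Sp) => // k _.
rewrite ractLZ; apply: SpR; apply: Spg.
by apply: allpairs_f; apply: mem_nth.
Qed.

Module KrullM.
Import classical_sets.

Lemma krull (R : comNzRingType) (I : R -> Prop) :
  is_ideal I -> ~ I 1 -> exists m, is_maximal_ideal m /\ forall x, I x -> m x.
Proof.
move=> II nI1.
pose P (A : set R) := (is_ideal A /\ ~ A 1 /\ forall x, I x -> A x) \/ (forall x, ~ A x).
have [A [PA Amax]] : exists A, P A /\ forall B, proper A B -> ~ P B.
  apply: Zorn_bigcup => F FP Ftot.
  case: (classic (exists X, F X /\ exists x, X x)); last first.
    move=> H; right => x [X FX Xx]; apply: H; by exists X; split => //; exists x.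
  case=> X0 [FX0 [x0 X0x0]].
  have FI X y : F X -> X y -> is_ideal X /\ ~ X 1 /\ (forall x, I x -> X x).
    move=> FX Xy; case: (FP X FX) => // H; by case: (H y).
  have [I0 [_ IX0]] := FI X0 x0 FX0 X0x0.
  left; split; last split.
  - split; first by exists X0 => //; case: I0.
    split.
      move=> x y [X FX Xx] [Y FY Yy].
      case: (Ftot X Y FX FY) => sub.
        exists Y => //; have [[_ [H _]] _] := FI Y y FY Yy; apply: H => //; exact: sub.
      exists X => //; have [[_ [H _]] _] := FI X x FX Xx; apply: H => //; exact: sub.
    move=> r x [X FX Xx]; exists X => //; have [[_ [_ H]] _] := FI X x FX Xx; exact: H.
  - by case=> X FX X1; have [_ [H _]] := FI X 1 FX X1.
  - by move=> x Ix; exists X0 => //; exact: IX0.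
case: PA => [[AI [nA1 IA]] | A0]; last first.
  exfalso; apply: (Amax I); last by left.
  split; first by move=> x /A0.
  move=> H; case: II => I0 _; exact: (A0 0 (H 0 I0)).
exists A; split => //; split => //; split => // J JI AJ.
case: (classic (J 1)) => [|nJ1]; first by left.
right => x; split; last exact: AJ.
move=> Jx; apply: NNPP => nAx; apply: (Amax J).
  by split => // H; apply: nAx; apply: H.
left; split => //; split => // y Iy; exact: AJ (IA y Iy).
Qed.

End KrullM.
Import KrullM.

Lemma comp_sum (R : idomainType) (L : algType R) (M N : lmodType L^c) (S : R -> Prop) :
  S 1 -> (forall a b, S a -> S b -> S (a * b)) -> (forall r, S r -> r != 0) ->
  Rtorsionfree M -> Rtorsionfree N -> fg_right_module M -> fg_right_module N ->
  loc_summand M N S ->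
  exists (f : M -> N) (g : N -> M) t,
    [/\ Llin f, Llin g, S t & forall y, g (f y) = ractR t y].
Proof.
move=> S1 SM Snz tfM tfN fgM fgN [F [G [linF linG GF]]].
have [f [D [SD fP flin]]] := glob S1 SM Snz tfN linF fgM.
have [g [D' [SD' gP glin]]] := glob S1 SM Snz tfM linG fgN.
exists f, g, (D' * D); split => //; first exact: SM.
move=> y.
have Tr := @lq_trans R L M S SM.
have H : loc_eq S (g (f y), D' * D) (y, 1).
  case: linG => Gv [Gresp [_ Gact]].
  case: linF => Fv _.
  apply: (Tr _ (loc_act (G (f y, 1)) 1 D)); first exact: SM (Gv (f y, 1) S1) SD.
    have -> : (g (f y), D' * D) = loc_act (g (f y), D') 1 D by rewrite /loc_act ractL1.
    exact: lq_act.
  apply: (Tr _ (G (F (y, 1)))); first exact: Gv (Fv (y, 1) S1).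
    apply: (Tr _ (G (f y, D))); first exact: Gv.
      have -> : (f y, D) = loc_act (f y, 1) 1 D by rewrite /loc_act ractL1 mul1r.
      by apply: lq_sym; apply: Gact.
    by apply: Gresp => //; [exact: (Fv (y, 1) S1)].
  exact: GF.
case: H => u Su /=; rewrite ractR1 => Hu.
apply/eqP; rewrite -subr_eq0; apply/eqP.
by apply: (tf_cancel tfM (Snz _ Su)).
Qed.

Section MkLin.
Variables (R : comNzRingType) (L : algType R) (U V : lmodType L^c) (f : U -> V).
Hypothesis hf : Llin f.
Lemma Llin_linear : linear f.
Proof. move=> l y y'; exact: hf. Qed.
Definition mkLin : {linear U -> V} :=
  HB.pack f (GRing.isLinear.Build _ _ _ _ f Llin_linear).
Lemma mkLinE y : mkLin y = f y. Proof. by []. Qed.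
End MkLin.

Lemma Llin_pair (R : comNzRingType) (L : algType R) (U V W : lmodType L^c)
  (f : U -> V) (g : U -> W) : Llin f -> Llin g -> Llin (fun y => (f y, g y) : V * W).
Proof. by move=> hf hg l y y'; rewrite hf hg. Qed.

Section LlinMore.
Variables (R : comNzRingType) (L : algType R) (U V : lmodType L^c).
Lemma Llin0f : Llin (fun _ : U => 0 : V).
Proof. by move=> l y y'; rewrite ractL0m addr0. Qed.
Lemma Llin_add (f g : U -> V) : Llin f -> Llin g -> Llin (fun y => f y + g y).
Proof.
move=> hf hg l y y'; rewrite hf hg ractLDm.
by rewrite -!addrA; congr (_ + _); rewrite addrCA.
Qed.
Lemma Llin_scale r (f : U -> V) : Llin f -> Llin (fun y => ractR r (f y)).
Proof. by move=> hf l y y'; rewrite hf ractRDr ractRL. Qed.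
Lemma Llin_fst : Llin (fun z : U * V => z.1). Proof. by []. Qed.
Lemma Llin_snd : Llin (fun z : U * V => z.2). Proof. by []. Qed.
End LlinMore.

Section Comax.
Variable R : idomainType.

Lemma comax (p q : R -> Prop) : is_maximal_ideal p -> is_maximal_ideal q ->
  ~ (forall x, q x <-> p x) -> exists z, q z /\ p (1 - z).
Proof.
move=> pmax qmax nqp.
pose J x := exists y z, [/\ p y, q z & x = y + z].
have JI : is_ideal J.
  split; first by exists 0, 0; split; [exact: m0 | exact: m0 | rewrite addr0].
  split.
    move=> x x' [y [z [py qz ->]]] [y' [z' [py' qz' ->]]].
    exists (y + y'), (z + z'); split; [exact: mD | exact: mD |].
    by rewrite addrACA.
  move=> r x [y [z [py qz ->]]]; exists (r * y), (r * z).
  by split; [exact: mMl | exact: mMl | rewrite mulrDr].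
have := qmax; case=> _ [_ /(_ J JI)] []; first by move=> x qx; exists 0, x; split; [exact: m0| |rewrite add0r].
  case=> y [z [py qz E]]; exists z; split => //.
  by have -> : 1 - z = y by rewrite E addrK.
move=> Jq; exfalso.
have := pmax; case=> _ [_ /(_ q (mI qmax))] [].
- by move=> x px; apply/Jq; exists x, 0; split; [| exact: m0 | rewrite addr0].
- by move=> /(mn1 qmax).
- by move=> H; apply: nqp => x; rewrite H.
Qed.

Lemma bvec (p : R -> Prop) (Q : (R -> Prop) -> Prop) (ps : seq (R -> Prop)) :
  (forall q, List.In q ps -> Q q -> is_maximal_ideal q /\ ~ (forall x, q x <-> p x)) ->
  is_maximal_ideal p ->
  exists b, (forall q, List.In q ps -> Q q -> q b) /\ p (1 - b).
Proof.
move=> H pmax; elim: ps H => [|q ps IH] H.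
  by exists 1; split => //; rewrite subrr; exact: m0.
have [b [Hb pb]] : exists b, (forall q, List.In q ps -> Q q -> q b) /\ p (1 - b).
  by apply: IH => q' q'in; apply: H; right.
case: (classic (Q q)) => Qq; last first.
  by exists b; split => // q' [<- //|]; apply: Hb.
have [qmax nqp] := H q (or_introl erefl) Qq.
have [z [qz pz]] := comax pmax qmax nqp.
exists (z * b); split.
  move=> q' [<- _|q'in Qq']; first exact: (mMr qmax).
  have [q'max _] := H q' (or_intror q'in) Qq'.
  exact: (mMl q'max _ (Hb q' q'in Qq')).
have -> : 1 - z * b = (1 - z) + z * (1 - b) by rewrite mulrBr mulr1 addrA subrK.
by apply: (mD pmax) => //; apply: (mMl pmax).
Qed.
End Comax.

Section Main.
Variables (R : idomainType) (L : algType R) (M N : lmodType L^c) (n : nat).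
Variable xs : 'I_n.+1 -> M.
Hypothesis gen : forall y, exists c : 'I_n.+1 -> R, y = \sum_j ractR (c j) (xs j).

Definition good (a : M -> N) (m : R -> Prop) :=
  exists (d : N -> M) c, [/\ Llin d, ~ m c & forall y, d (a y) = ractR c y].

Lemma perturb m (mmax : is_maximal_ideal m) (a a1 a2 : M -> N) u w :
  Llin a1 -> Llin a2 -> good a1 m -> ~ m u -> m w ->
  (forall y, a y = ractR u (a1 y) + ractR w (a2 y)) -> good a m.
Proof.
move=> l1 l2 [d1 [c1 [d1lin nc1 H1]]] nu mw Ha.
have alin : Llin a.
  have -> : a = (fun y => ractR u (a1 y) + ractR w (a2 y)) by apply: functional_extensionality.
  by apply: Llin_add; apply: Llin_scale.
have slin : Llin (fun y => d1 (a y)) by apply: Llin_comp.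
have Hs y : d1 (a y) = ractR (u * c1) y + ractR w (d1 (a2 y)).
  by rewrite Ha (LlinD d1lin) !(LlinR d1lin) H1 ractRA.
have nv : ~ m (u * c1) by case/(mprime mmax).
have [rho [c [rlin nc Hr]]] := CHmax gen mmax slin nv mw Hs.
exists (fun z => rho (d1 z)), c; split => //; exact: Llin_comp.
Qed.

Lemma build (s : R) (ps : seq (R -> Prop)) :
  (forall p, is_maximal_ideal p -> exists (f : M -> N) (g : N -> M) t,
      [/\ Llin f, Llin g, ~ p t & forall y, g (f y) = ractR t y]) ->
  exists a : M -> N, Llin a /\
    forall p, List.In p ps -> is_maximal_ideal p -> p s -> good a p.
Proof.
move=> loc; elim: ps => [|p ps [a1 [l1 IH]]].
  by exists (fun _ => 0); split => //; exact: Llin0f.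
case: (classic (is_maximal_ideal p /\ p s /\ ~ good a1 p)); last first.
  move=> H; exists a1; split => // q [<- qmax qs|qin qmax qs]; last exact: IH.
  by apply: NNPP => ng; apply: H.
case=> pmax [ps_ ng].
have [f2 [g2 [t2 [f2lin g2lin nt2 H2]]]] := loc p pmax.
have [b [Hb pb]] := @bvec R p (fun q => is_maximal_ideal q /\ q s) ps
   (fun q qin '(conj qmax qs) => conj qmax (fun E => ng (
       let e : q = p := functional_extensionality _ _
           (fun x => propositional_extensionality _ _ (E x)) in
       eq_ind q (fun r => good a1 r) (IH q qin qmax qs) p e))) pmax.
pose a := 1 - b.
exists (fun y => ractR a (a1 y) + ractR b (f2 y)); split.
  by apply: Llin_add; apply: Llin_scale.
have nb : ~ p b.
  by move=> pb'; apply: (mn1 pmax); rewrite -(subrK b 1); apply: (mD pmax).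
move=> q [<- _ _|qin qmax qs].
  apply: (perturb pmax (a1 := f2) (a2 := a1) (u := b) (w := a)) => //.
  - by exists g2, t2; split.
  - by move=> y; rewrite addrC.
have qb := Hb q qin (conj qmax qs).
apply: (perturb qmax (a1 := a1) (a2 := f2) (u := a) (w := b)) => //.
- exact: IH.
- by move=> qa; apply: (mn1 qmax); rewrite -(subrK b 1); apply: (mD qmax).
Qed.
End Main.

Theorem mainTheorem18 (R : idomainType) (L : algType R)
    (M N K : lmodType (L^c)) :
  finite_character R ->
  fg_Rmodule L ->
  fg_right_module M -> fg_right_module N -> fg_right_module K ->
  Rtorsionfree M -> Rtorsionfree N -> Rtorsionfree K ->
  (forall m : R -> Prop, is_maximal_ideal m ->
     loc_summand M N (fun r => ~ m r)) ->
  loc_summand M K (fun r => r != 0%R) ->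
  is_summand M (N * K)%type.
Proof.
move=> fc fgL fgM fgN fgK tfM tfN tfK locN locK.
have [fK [gK [s [fKlin gKlin s0 HK]]]] :=
  comp_sum (oner_neq0 R) (fun a b => @mulf_neq0 R a b) (fun r h => h)
    tfM tfK fgM fgK locK.
have loc p : is_maximal_ideal p -> exists (f : M -> N) (g : N -> M) t,
      [/\ Llin f, Llin g, ~ p t & forall y, g (f y) = ractR t y].
  move=> pmax.
  have Snz r : ~ p r -> r != 0 by move=> pr; apply/eqP => r0; apply: pr; rewrite r0; exact: (m0 pmax).
  have SM x y : ~ p x -> ~ p y -> ~ p (x * y) by move=> px py /(mprime pmax) [].
  have [f [g [t [fl gl St H]]]] := comp_sum (mn1 pmax) SM Snz tfM tfN fgM fgN (locN p pmax).
  by exists f, g, t.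
have [n [xs gen]] := Rgen fgL fgM.
have [ps Hps] := fc s s0.
have [a [alin Ha]] := build gen s ps loc.
pose I c := exists (d : N -> M) (e : K -> M),
   [/\ Llin d, Llin e & forall y, d (a y) + e (fK y) = ractR c y].
have II : is_ideal I.
  split.
    exists (fun _ => 0), (fun _ => 0); split; try exact: Llin0f.
    by move=> y; rewrite addr0 ractR0l.
  split.
    move=> x y [d [e [dl el H]]] [d' [e' [dl' el' H']]].
    exists (fun z => d z + d' z), (fun z => e z + e' z); split; try exact: Llin_add.
    by move=> z; rewrite ractRDl -H -H' addrACA.
  move=> r x [d [e [dl el H]]].
  exists (fun z => ractR r (d z)), (fun z => ractR r (e z)); split; try exact: Llin_scale.
  by move=> z; rewrite -ractRDr H ractRA.
have I1 : I 1.
  apply: NNPP => nI1.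
  have [m [mmax Im]] := krull II nI1.
  have Is : I s.
    exists (fun _ => 0), gK; split => //; first exact: Llin0f.
    by move=> y; rewrite add0r HK.
  have ms := Im s Is.
  have [p pin Ep] := Hps m mmax ms.
  have mp : m = p.
    by apply: functional_extensionality => x; apply: propositional_extensionality.
  subst p.
  have [d [c [dl nc Hd]]] := Ha m pin mmax ms.
  apply: nc; apply: Im; exists d, (fun _ => 0); split => //; first exact: Llin0f.
  by move=> y; rewrite addr0 Hd.
case: I1 => d [e [dl el H]].
exists (mkLin (Llin_pair alin fKlin)).
exists (mkLin (Llin_add (Llin_comp (@Llin_fst _ _ N K) dl) (Llin_comp (@Llin_snd _ _ N K) el))).
by move=> y; rewrite !mkLinE /= H ractR1.
Qed.
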